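(* Let $G$ be a finite group, $S\le G$, $B$ a simple $S$-Galois algebra over a field $k$, and $A=\mathrm{Ind}_S^G(B)$. Then $|\mathrm{Aut}_G(A)|=|G|$ if and only if (1) $|\mathrm{Aut}_S(B)|=|S|$, (2) $S$ is a normal subgroup of $G$, and (3) for all $g\in G$, $B^{(g)}\cong B$ as $S$-algebras.
   Context: An $S$-algebra is a $k$-algebra with $S$ acting by algebra automorphisms; $\mathrm{Aut}_S(B)$ = $S$-equivariant algebra automorphisms. A simple $S$-Galois algebra is an $S$-algebra $B$, simple as an algebra, with $B^S=k$ and $B\otimes_kB\to\prod_{s\in S}B$, $x\otimes y\mapsto(x(s\cdot y))_s$, bijective. $\mathrm{Ind}_S^G(B)=\{r:G\to B\mid r(sg)=s\cdot r(g)\}$ with pointwise operations and $(g\cdot r)(x)=r(xg)$. For $g\in G$, $B^{(g)}$ is $B$ with the $g^{-1}Sg$-action $h\cdot_g b=(ghg^{-1})\cdot b$ (an $S$-algebra when $S$ is normal). *)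

(* Defs.v *)
From HB Require Import structures.
From mathcomp Require Import all_boot all_algebra all_fingroup.
From mathcomp Require Import falgebra.
Set Implicit Arguments. Unset Strict Implicit. Unset Printing Implicit Defensive.
Import GRing.Theory.
Local Open Scope ring_scope.

Definition has_card_mod (T : Type) (P : T -> Prop) (eqv : T -> T -> Prop)
    (n : nat) : Prop :=
  exists f : 'I_n -> T,
    [/\ forall i, P (f i),
        forall i j, eqv (f i) (f j) -> i = j &
        forall x, P x -> exists i, eqv (f i) x].

Section Defs.
Variables (k : fieldType) (gT : finGroupType) (B : falgType k).

Definition alg_aut (f : B -> B) : Prop :=
  [/\ forall (c : k) (x y : B), f (c *: x + y) = c *: f x + f y,
      f 1 = 1,
      forall x y : B, f (x * y) = f x * f y &
      bijective f].

(* S acts on B by algebra automorphisms (act is only relevant on S) *)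
Definition is_S_algebra (S : {set gT}) (act : gT -> B -> B) : Prop :=
  [/\ forall s, s \in S -> alg_aut (act s),
      act 1%g =1 id &
      forall s t, s \in S -> t \in S -> act (s * t)%g =1 act s \o act t].

Definition two_sided_ideal (I : B -> Prop) : Prop :=
  [/\ I 0,
      forall x y, I x -> I y -> I (x + y) &
      forall a x, I x -> I (a * x) /\ I (x * a)].

Definition simple_algebra : Prop :=
  (1 != 0 :> B) /\
  forall I, two_sided_ideal I -> (forall x, I x -> x = 0) \/ (forall x, I x).

Definition invariants_trivial (S : {set gT}) (act : gT -> B -> B) : Prop :=
  forall b : B, (forall s, s \in S -> act s b = b) <-> exists c : k, b = c%:A.

(* The Galois map B (x)_k B -> prod_{s in S} B, x (x) y |-> (x (s . y))_s.
   B (x)_k B is modelled by coefficient matrices c w.r.t. the basis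
   (e_i (x) e_j) where e = vbasis {:B}. *)
Definition galois_map (act : gT -> B -> B) (c : 'M[k]_(\dim {:B})) (s : gT) : B :=
  \sum_(i < \dim {:B}) \sum_(j < \dim {:B})
     c i j *: (tnth (vbasis {:B}) i * act s (tnth (vbasis {:B}) j)).

Definition galois_bijective (S : {set gT}) (act : gT -> B -> B) : Prop :=
  forall f : gT -> B,
    exists! c : 'M[k]_(\dim {:B}), forall s, s \in S -> galois_map act c s = f s.

Definition simple_S_Galois (S : {set gT}) (act : gT -> B -> B) : Prop :=
  [/\ is_S_algebra S act, simple_algebra, invariants_trivial S act &
      galois_bijective S act].

Definition S_aut (S : {set gT}) (act : gT -> B -> B) (f : B -> B) : Prop :=
  alg_aut f /\ forall s b, s \in S -> f (act s b) = act s (f b).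

(* B^(g) ~= B as S-algebras (S normal): phi ((g h g^-1) . b) = h . phi b *)
Definition conj_iso (S : {set gT}) (act : gT -> B -> B) (g : gT) : Prop :=
  exists phi : B -> B, alg_aut phi /\
    forall h b, h \in S -> phi (act (g * h * g^-1)%g b) = act h (phi b).

(* Elements: functions r : G -> B with r(sg) = s . r(g); represented as
   finite functions on gT vanishing outside G. *)
Definition in_Ind (G S : {set gT}) (act : gT -> B -> B) (r : {ffun gT -> B}) : Prop :=
  (forall x, x \notin G -> r x = 0) /\
  (forall s g, s \in S -> g \in G -> r (s * g)%g = act s (r g)).

Definition ind_add (r1 r2 : {ffun gT -> B}) : {ffun gT -> B} := [ffun x => r1 x + r2 x].
Definition ind_scale (c : k) (r : {ffun gT -> B}) : {ffun gT -> B} := [ffun x => c *: r x].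
Definition ind_mul (r1 r2 : {ffun gT -> B}) : {ffun gT -> B} := [ffun x => r1 x * r2 x].
Definition ind_one (G : {set gT}) : {ffun gT -> B} :=
  [ffun x => if x \in G then 1 else 0].
Definition ind_act (g : gT) (r : {ffun gT -> B}) : {ffun gT -> B} := [ffun x => r (x * g)%g].

(* G-equivariant k-algebra automorphisms of Ind_S^G(B), as maps on the
   ambient function space; two are identified when they agree on Ind. *)
Definition Ind_aut (G S : {set gT}) (act : gT -> B -> B)
    (phi : {ffun gT -> B} -> {ffun gT -> B}) : Prop :=
  let A := in_Ind G S act in
  (forall r, A r -> A (phi r)) /\
  (forall c r1 r2, A r1 -> A r2 ->
     phi (ind_add (ind_scale c r1) r2) = ind_add (ind_scale c (phi r1)) (phi r2)) /\
  (forall r1 r2, A r1 -> A r2 -> phi (ind_mul r1 r2) = ind_mul (phi r1) (phi r2)) /\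
  phi (ind_one G) = ind_one G /\
  (forall r1 r2, A r1 -> A r2 -> phi r1 = phi r2 -> r1 = r2) /\
  (forall r', A r' -> exists r, A r /\ phi r = r') /\
  (forall g r, g \in G -> A r -> phi (ind_act g r) = ind_act g (phi r)).

Definition Ind_eqv (G S : {set gT}) (act : gT -> B -> B)
    (phi psi : {ffun gT -> B} -> {ffun gT -> B}) : Prop :=
  forall r, in_Ind G S act r -> phi r = psi r.

End Defs.

(* Main.v *)
Require Import Defs.
From HB Require Import structures.
From mathcomp Require Import all_boot all_algebra all_fingroup.
From mathcomp Require Import falgebra zify.
From Stdlib Require Import ClassicalEpsilon.
Import GRing.Theory.
Local Open Scope group_scope.
Local Open Scope ring_scope.
Section AlgAut.
Context {k : fieldType} {B : falgType k}.

Lemma autL {f : B -> B} : alg_aut f ->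
  forall c x y, f (c *: x + y) = c *: f x + f y.
Proof. by case. Qed.

Lemma aut0 {f : B -> B} : alg_aut f -> f 0 = 0.
Proof.
case=> lin _ _ _; have H := lin 1 0 0; rewrite scaler0 scale1r addr0 in H.
by apply: (addrI (f 0)); rewrite addr0 -H.
Qed.

Lemma autD {f : B -> B} : alg_aut f -> forall x y, f (x + y) = f x + f y.
Proof. by move=> Hf x y; have := autL Hf 1 x y; rewrite !scale1r. Qed.

Lemma autZ {f : B -> B} : alg_aut f -> forall c x, f (c *: x) = c *: f x.
Proof.
move=> Hf c x; case: (Hf) => lin _ _ _.
by rewrite -[c *: x]addr0 lin (aut0 Hf) addr0.
Qed.

Lemma autN {f : B -> B} : alg_aut f -> forall x, f (- x) = - f x.
Proof. by move=> Hf x; rewrite -scaleN1r autZ // scaleN1r. Qed.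

Lemma autB {f : B -> B} : alg_aut f -> forall x y, f (x - y) = f x - f y.
Proof. by move=> Hf x y; rewrite autD // autN. Qed.

Lemma autM {f : B -> B} : alg_aut f -> forall x y, f (x * y) = f x * f y.
Proof. by case. Qed.

Lemma aut1 {f : B -> B} : alg_aut f -> f 1 = 1.
Proof. by case. Qed.

Lemma aut_sum {f : B -> B} : alg_aut f ->
  forall (I : Type) (r : seq I) (P : pred I) (F : I -> B),
  f (\sum_(i <- r | P i) F i) = \sum_(i <- r | P i) f (F i).
Proof.
move=> Hf I r P F; elim/big_rec2: _ => [|i y1 y2 _ <-]; first exact: aut0.
by rewrite autD.
Qed.

Lemma aut_inj {f : B -> B} : alg_aut f -> injective f.
Proof. by case=> _ _ _ /bij_inj. Qed.

Lemma aut_comp {f g : B -> B} : alg_aut f -> alg_aut g -> alg_aut (f \o g).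
Proof.
move=> Hf Hg; split=> [c x y|||] /=.
- by rewrite (autL Hg) (autL Hf).
- by rewrite !aut1.
- by move=> x y; rewrite !autM.
by apply: bij_comp; [case: Hf | case: Hg].
Qed.

Lemma aut_inv {f g : B -> B} : alg_aut f -> cancel f g -> cancel g f -> alg_aut g.
Proof.
move=> Hf fK gK; split=> [c x y|||].
- by apply: (aut_inj Hf); rewrite gK (autL Hf) !gK.
- by apply: (aut_inj Hf); rewrite gK aut1.
- by move=> x y; apply: (aut_inj Hf); rewrite gK autM // !gK.
by exists f.
Qed.

Lemma central_idem (Hs : simple_algebra B) (c : B) :
  (forall b, c * b = b * c) -> c * c = c -> c = 0 \/ c = 1.
Proof.
move=> cC cc; case: Hs => _ /(_ (fun z => exists y, z = c * y)) [].
- split; first by exists 0; rewrite mulr0.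
  + by move=> x y [x' ->] [y' ->]; exists (x' + y'); rewrite mulrDr.
  move=> a x [y ->]; split; first by exists (a * y); rewrite mulrA -cC mulrA.
  by exists (y * a); rewrite mulrA.
- by move=> H; left; apply: H; exists 1; rewrite mulr1.
move=> H; right; case: (H 1) => y Hy.
by rewrite -[c]mulr1 Hy mulrA cc -Hy.
Qed.

End AlgAut.

Lemma inj_dim (k : fieldType) (U V : vectType k) (f : U -> V) :
  (forall c x y, f (c *: x + y) = c *: f x + f y) -> injective f ->
  (dim U <= dim V)%N.
Proof.
move=> lin finj.
have f0 : f 0 = 0.
  have H := lin 1 0 0; rewrite scaler0 scale1r addr0 in H.
  by apply: (addrI (f 0)); rewrite addr0 -H.
have fsum : forall (I : finType) (c : I -> k) (x : I -> U),
    f (\sum_i c i *: x i) = \sum_i c i *: f (x i).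
  move=> I c x; elim/big_rec2: _ => [|i y1 y2 _ <-] //.
set X := vbasis (fullv : {vspace U}).
have freeX : free X by exact: (basis_free (vbasisP _)).
pose Y := map_tuple f X.
have freeY : free Y.
  apply/freeP => c Hc i; move/freeP: freeX; apply => //.
  apply: finj; rewrite f0 -Hc fsum; apply: eq_bigr => j _.
  by rewrite (nth_map 0) // size_tuple.
have := dimvS (subvf <<Y>>%VS); rewrite (eqP freeY) size_tuple !dimvf.
done.
Qed.
Section Main.
Variables (k : fieldType) (gT : finGroupType) (G S : {group gT}) (B : falgType k)
  (act : gT -> B -> B).
Hypothesis sSG : S \subset G.
Hypothesis HSa : is_S_algebra S act.
Hypothesis Hs : simple_algebra B.
Hypothesis Hinv : invariants_trivial S act.

Lemma act_aut {s} : s \in S -> alg_aut (act s).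
Proof. by case: HSa => H _ _; apply: H. Qed.

Lemma act1 b : act 1%g b = b.
Proof. by case: HSa => _ H _; apply: H. Qed.

Lemma actM s t b : s \in S -> t \in S -> act (s * t)%g b = act s (act t b).
Proof. by case: HSa => _ _ H Hs' Ht; apply: H. Qed.

Lemma actVK s b : s \in S -> act s^-1%g (act s b) = b.
Proof. by move=> sS; rewrite -actM ?groupV // mulVg act1. Qed.

Lemma actKV s b : s \in S -> act s (act s^-1%g b) = b.
Proof. by move=> sS; rewrite -actM ?groupV // mulgV act1. Qed.

Lemma act0 s : s \in S -> act s 0 = 0.
Proof. by move=> sS; rewrite (aut0 (act_aut sS)). Qed.

Lemma act_one s : s \in S -> act s 1 = 1.
Proof. by move=> sS; apply: aut1 (act_aut sS). Qed.

Definition A := in_Ind G S act.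

Definition el1 (b : B) : {ffun gT -> B} :=
  [ffun x => if x \in S then act x b else 0].

Definition zf : {ffun gT -> B} := [ffun _ => 0].

Lemma sub_SG {x} : x \in S -> x \in G.
Proof. by move=> xS; apply: (subsetP sSG). Qed.

Lemma inA_el1 b : A (el1 b).
Proof.
split=> [x xG|s g sS gG]; rewrite !ffunE.
  by case: ifP => // /sub_SG; rewrite (negbTE xG).
by rewrite groupMl //; case: ifP => gS; rewrite ?actM ?act0.
Qed.

Lemma inA_act {g r} : g \in G -> A r -> A (ind_act g r).
Proof.
move=> gG [r0 rM]; split=> [x xG|s h sS hG]; rewrite !ffunE.
  by apply: r0; rewrite groupMr.
by rewrite -mulgA (rM s (h * g)%g) ?groupM.
Qed.

Lemma inA_mul {r1 r2} : A r1 -> A r2 -> A (ind_mul r1 r2).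
Proof.
move=> [a0 aM] [b0 bM]; split=> [x xG|s g sS gG]; rewrite !ffunE.
  by rewrite a0 // mul0r.
by rewrite aM // bM // (autM (act_aut sS)).
Qed.

Lemma inA_lin c {r1 r2} : A r1 -> A r2 -> A (ind_add (ind_scale c r1) r2).
Proof.
move=> [a0 aM] [b0 bM]; split=> [x xG|s g sS gG]; rewrite !ffunE.
  by rewrite a0 // b0 // scaler0 addr0.
by rewrite aM // bM // (autL (act_aut sS)).
Qed.

Lemma inA_zf : A zf.
Proof. by split=> [x _|s g sS _]; rewrite !ffunE ?act0. Qed.

Lemma inA_one : A (@ind_one _ _ B G).
Proof.
split=> [x xG|s g sS gG]; rewrite !ffunE; first by rewrite (negbTE xG).
by rewrite (groupMl _ (sub_SG sS)) gG act_one.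
Qed.

Lemma el1_act s b : s \in S -> el1 (act s b) = ind_act s (el1 b).
Proof.
move=> sS; apply/ffunP=> x; rewrite !ffunE groupMr //.
by case: ifP => // xS; rewrite actM.
Qed.

Lemma act_el1_one {s} : s \in S -> ind_act s (el1 1) = el1 1.
Proof. by move=> sS; rewrite -el1_act ?act_one. Qed.

Lemma el1_at1 b : el1 b 1%g = b.
Proof. by rewrite ffunE group1 act1. Qed.

Lemma mul_el r g : A r -> g \in G ->
  ind_mul r (ind_act g^-1 (el1 1)) = ind_act g^-1 (el1 (r g)).
Proof.
move=> [r0 rM] gG; apply/ffunP=> x; rewrite !ffunE.
case: ifP => xS; last by rewrite mulr0.
by rewrite act_one // mulr1 -rM ?mulgKV // sub_SG.
Qed.


Definition Phi (n : gT) (psi : B -> B) (r : {ffun gT -> B}) : {ffun gT -> B} :=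
  [ffun y => if y \in G then psi (r (n^-1 * y)%g) else 0].

Definition twist (n : gT) (psi : B -> B) :=
  forall s b, s \in S -> psi (act s b) = act (n * s * n^-1)%g (psi b).

Lemma conjS n s : n \in 'N(S) -> s \in S -> (n^-1 * s * n)%g \in S.
Proof. by move=> nN sS; rewrite -mulgA -conjgE memJ_norm. Qed.

Lemma conjS' n s : n \in 'N(S) -> s \in S -> (n * s * n^-1)%g \in S.
Proof. by move=> nN sS; rewrite -{1}(invgK n) conjS ?groupV. Qed.

Lemma Phi_aut n psi : n \in G -> n \in 'N(S) -> alg_aut psi -> twist n psi ->
  Ind_aut G S act (Phi n psi).
Proof.
move=> nG nN Hpsi tw.
have nVG : n^-1%g \in G by rewrite groupV.
split.
  move=> r [r0 rM]; split=> [x xG|s g sS gG]; rewrite !ffunE.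
    by rewrite (negbTE xG).
  rewrite (groupMl _ (sub_SG sS)) gG.
  have -> : (n^-1 * (s * g))%g = ((n^-1 * s * n) * (n^-1 * g))%g.
    by rewrite !mulgA mulgK.
  rewrite rM ?conjS ?groupM // tw ?conjS //.
  by rewrite !mulgA mulgV mul1g mulgK.
split.
  move=> c r1 r2 _ _; apply/ffunP=> y; rewrite !ffunE.
  by case: ifP => _; rewrite ?scaler0 ?addr0 // (autL Hpsi).
split.
  move=> r1 r2 _ _; apply/ffunP=> y; rewrite !ffunE.
  by case: ifP => _; rewrite ?mulr0 // (autM Hpsi).
split.
  apply/ffunP=> y; rewrite !ffunE.
  by case: ifP => yG; rewrite // groupMl // yG (aut1 Hpsi).
split.
  move=> r1 r2 [a0 _] [b0 _] /ffunP E; apply/ffunP=> x.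
  case xG: (x \in G); last by rewrite a0 ?b0 ?xG.
  have := E (n * x)%g; rewrite !ffunE groupM // mulKg.
  exact: (aut_inj Hpsi).
split.
  move=> r' [r0 rM]; case: Hpsi => _ _ _ [psi' psiK psiK'].
  exists [ffun x => if x \in G then psi' (r' (n * x)%g) else 0]; split.
    split=> [x xG|s g sS gG]; rewrite !ffunE; first by rewrite (negbTE xG).
    rewrite (groupMl _ (sub_SG sS)) gG.
    have -> : (n * (s * g))%g = ((n * s * n^-1) * (n * g))%g.
      by rewrite !mulgA mulgKV.
    rewrite rM ?conjS' ?groupM //.
    rewrite -{1}[r' (n * g)%g]psiK' -tw // psiK //.
  apply/ffunP=> y; rewrite !ffunE.
  case: ifP => yG; last by rewrite r0 ?yG.
  by rewrite groupMl // yG mulKVg psiK'.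
move=> g r gG _; apply/ffunP=> y; rewrite !ffunE groupMr //.
by case: ifP => // _; rewrite mulgA.
Qed.

Lemma Phi_el n psi b : n \in G -> Phi n psi (el1 b) n = psi b.
Proof. by move=> nG; rewrite ffunE nG mulVg el1_at1. Qed.

Lemma Phi_one n psi : n \in G -> n \in 'N(S) -> alg_aut psi ->
  Phi n psi (el1 1) = ind_act n^-1 (el1 1).
Proof.
move=> nG nN Hpsi; apply/ffunP=> y; rewrite !ffunE.
case: ifP => yG.
  have E : ((y * n^-1)%g \in S) = ((n^-1 * y)%g \in S).
    by rewrite -[X in _ = X](memJ_norm _ (groupVr nN)) conjgE invgK -(mulgA n^-1%g) mulKVg.
  rewrite E; case: ifP => HS; rewrite ?(aut0 Hpsi) //.
  by rewrite !act_one ?E // (aut1 Hpsi).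
case: ifP => // /sub_SG; rewrite groupMr ?groupV // yG //.
Qed.


Lemma central01 {r} : A r -> ind_mul r r = r ->
  (forall r', A r' -> ind_mul r r' = ind_mul r' r) ->
  forall x, x \in G -> r x = 0 \/ r x = 1.
Proof.
move=> rA rr rC x xG; apply: (central_idem Hs).
  move=> b; have := rC _ (inA_act (groupVr xG) (inA_el1 b)).
  by move/ffunP/(_ x); rewrite !ffunE mulgV group1 act1.
by have := congr1 (fun f : {ffun gT -> B} => f x) rr; rewrite /= ffunE.
Qed.

Lemma zf_el1_one : el1 1 <> zf.
Proof.
move/ffunP/(_ 1%g); rewrite el1_at1 ffunE => E.
by case: Hs => /eqP; rewrite E.
Qed.

Lemma el1_zero : el1 0 = zf.
Proof. by apply/ffunP=> x; rewrite !ffunE; case: ifP => // xS; rewrite act0. Qed.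

Lemma el1_lin c b b' : el1 (c *: b + b') = ind_add (ind_scale c (el1 b)) (el1 b').
Proof.
apply/ffunP=> x; rewrite !ffunE; case: ifP => xS; last by rewrite scaler0 addr0.
by rewrite (autL (act_aut xS)).
Qed.

Lemma el1_mul b b' : el1 (b * b') = ind_mul (el1 b) (el1 b').
Proof.
apply/ffunP=> x; rewrite !ffunE; case: ifP => xS; last by rewrite mulr0.
by rewrite (autM (act_aut xS)).
Qed.

Lemma el1_central r : ind_mul (el1 1) r = ind_mul r (el1 1).
Proof.
apply/ffunP=> x; rewrite !ffunE; case: ifP => xS; last by rewrite mul0r mulr0.
by rewrite act_one // mul1r mulr1.
Qed.

Lemma inj_surj_bij (T : choiceType) (f : T -> T) :
  injective f -> (forall y, exists x, f x = y) -> bijective f.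
Proof.
move=> finj fsurj.
have ex : forall y, exists x, f x == y by move=> y; case: (fsurj y) => x <-; exists x.
exists (fun y => xchoose (ex y)) => [x|y]; last exact/eqP/(xchooseP (ex y)).
by apply: finj; apply/eqP/(xchooseP (ex (f x))).
Qed.

#[local] Hint Resolve inA_el1 inA_zf : core.

Section Ext.
Variable phi : {ffun gT -> B} -> {ffun gT -> B}.
Hypothesis Hphi : Ind_aut G S act phi.

Lemma phiA {r} : A r -> A (phi r).
Proof. by case: Hphi => H _; apply: H. Qed.
Lemma phiL c {r1 r2} : A r1 -> A r2 ->
  phi (ind_add (ind_scale c r1) r2) = ind_add (ind_scale c (phi r1)) (phi r2).
Proof. by case: Hphi => _ [H _]; apply: H. Qed.
Lemma phiM {r1 r2} : A r1 -> A r2 -> phi (ind_mul r1 r2) = ind_mul (phi r1) (phi r2).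
Proof. by case: Hphi => _ [_ [H _]]; apply: H. Qed.
Lemma phiI {r1 r2} : A r1 -> A r2 -> phi r1 = phi r2 -> r1 = r2.
Proof. by case: Hphi => _ [_ [_ [_ [H _]]]]; apply: H. Qed.
Lemma phiS {r'} : A r' -> exists r, A r /\ phi r = r'.
Proof. by case: Hphi => _ [_ [_ [_ [_ [H _]]]]]; apply: H. Qed.
Lemma phiE {g r} : g \in G -> A r -> phi (ind_act g r) = ind_act g (phi r).
Proof. by case: Hphi => _ [_ [_ [_ [_ [_ H]]]]]; apply: H. Qed.

Lemma phi0 : phi zf = zf.
Proof.
have E : ind_add (ind_scale (-1) zf) zf = zf.
  by apply/ffunP=> x; rewrite !ffunE scaler0 addr0.
rewrite -{1}E phiL //; apply/ffunP=> x; rewrite !ffunE.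
by rewrite scaleN1r addNr.
Qed.

Definition e := phi (el1 1).

Lemma eA : A e.
Proof. exact/phiA/inA_el1. Qed.

Lemma e_idem : ind_mul e e = e.
Proof. by rewrite /e -phiM ?inA_el1 // -el1_mul mulr1. Qed.

Lemma e_central r : A r -> ind_mul e r = ind_mul r e.
Proof.
move=> rA; case: (phiS rA) => r0 [r0A <-].
by rewrite /e -!phiM ?inA_el1 // el1_central.
Qed.

Lemma e01 {x} : x \in G -> e x = 0 \/ e x = 1.
Proof. exact: (central01 eA e_idem e_central). Qed.

Lemma e_ex : exists2 x, x \in G & e x = 1.
Proof.
case: (pickP (fun x => (x \in G) && (e x == 1))) => [x /andP[xG /eqP ex]|H].
  by exists x.
exfalso; apply: zf_el1_one; apply: phiI; rewrite ?inA_el1 ?inA_zf // phi0.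
apply/ffunP=> x; rewrite ffunE; case xG: (x \in G).
  by case: (e01 xG) => // ex; move: (H x); rewrite xG ex eqxx.
by case: eA => e0 _; rewrite e0 ?xG.
Qed.

Section N.
Variable n : gT.
Hypothesis en : e n = 1.

Lemma one_nz : (1 : B) != 0.
Proof. by case: Hs. Qed.

Lemma nG : n \in G.
Proof.
apply/negPn/negP=> nnG; case: eA => e0 _.
by move: en; rewrite e0 // => /eqP; rewrite eq_sym (negbTE one_nz).
Qed.

Definition u := ind_act n^-1 (el1 1).

Lemma uA : A u.
Proof. exact: inA_act (groupVr nG) (inA_el1 1). Qed.

Lemma u01 x : u x = 0 \/ u x = 1.
Proof. by rewrite !ffunE; case: ifP => xS; [rewrite act_one //; right|left]. Qed.

Lemma e_eq : e = u.
Proof.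
have ue : ind_mul u e = u.
  apply/ffunP=> x; rewrite !ffunE; case: ifP => xS; last by rewrite mul0r.
  have ex : e x = 1.
    by case: eA => _ eM; rewrite -(mulgKV n x) eM ?nG // en act_one.
  by rewrite ex act_one // mulr1.
case: (phiS uA) => w [wA wu].
have uu : ind_mul u u = u.
  by apply/ffunP=> x; case: (u01 x) => ux; rewrite ffunE ux ?mulr0 ?mulr1.
have uC : forall r, ind_mul u r = ind_mul r u.
  by move=> r; apply/ffunP=> x; rewrite [in LHS]ffunE [in RHS]ffunE; case: (u01 x) => ->;
    rewrite ?mulr0 ?mul0r ?mulr1 ?mul1r.
have ww : ind_mul w w = w by apply: (phiI (inA_mul wA wA) wA); rewrite phiM // wu.
have wC : forall r, A r -> ind_mul w r = ind_mul r w.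
  by move=> r rA; apply: (phiI (inA_mul wA rA) (inA_mul rA wA)); rewrite !phiM // wu.
have w1 : ind_mul w (el1 1) = w.
  by apply: (phiI (inA_mul wA (inA_el1 1)) wA); rewrite phiM // wu -/e ue.
have w01 := central01 wA ww wC.
case: (pickP (fun x => w x != 0)) => [x wx|H]; last first.
  have wz : w = zf by apply/ffunP=> x; rewrite ffunE; apply/eqP/negbFE/H.
  move: wu; rewrite wz phi0 => /ffunP/(_ n); rewrite !ffunE mulgV group1 act1.
  by move=> /eqP; rewrite eq_sym (negbTE one_nz).
have xS : x \in S.
  apply/negPn/negP=> xS; move: wx; rewrite -w1 ffunE.
  by rewrite ffunE (negbTE xS) mulr0 eqxx.
case: wA => w0 wM.
have w1nz : w 1%g != 0.
  apply: contraNneq wx => w10.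
  by rewrite -[x]mulg1 wM // w10 act0.
have w11 : w 1%g = 1 by case: (w01 _ (group1 G)) => // w10; rewrite w10 eqxx in w1nz.
have wE : w = el1 1.
  apply/ffunP=> y; rewrite ffunE; case: ifP => yS.
    by rewrite -[y]mulg1 wM // w11 mulg1.
  by rewrite -w1 ffunE ffunE yS mulr0.
by rewrite /e -wE wu.
Qed.

Lemma nN : n \in 'N(S).
Proof.
rewrite -groupV inE; apply/subsetP=> y /imsetP [s sS ->].
have : e (n * s)%g = 1.
  rewrite -en /e -{2}(act_el1_one sS) phiE ?inA_el1 ?sub_SG //.
  by rewrite ffunE.
rewrite e_eq !ffunE; case: ifP => H; last by move=> /eqP; rewrite eq_sym (negbTE one_nz).
by rewrite conjgE invgK mulgA.
Qed.

Definition psi b := phi (el1 b) n.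

Lemma phi_formula {r y} : A r -> y \in G -> phi r y = psi (r (n^-1 * y)%g).
Proof.
move=> rA yG; set g := (n^-1 * y)%g.
have gG : g \in G by rewrite groupM ?groupV ?nG.
have gVG : g^-1%g \in G by rewrite groupV.
have v1 : phi (ind_act g^-1 (el1 1)) y = 1.
  rewrite phiE ?inA_el1 // ffunE -/e /g invMg invgK mulKVg //.
rewrite -[phi r y]mulr1 -v1.
have := congr1 (fun f : {ffun gT -> B} => f y) (phiM rA (inA_act gVG (inA_el1 1))).
rewrite ffunE /= => <-.
rewrite mul_el // phiE ?inA_el1 // ffunE /psi.
by rewrite /g invMg invgK mulKVg.
Qed.

Lemma psi_twist : twist n psi.
Proof.
move=> s b sS; rewrite /psi el1_act // phiE ?inA_el1 ?sub_SG // ffunE.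
case: (phiA (inA_el1 b)) => _ pM.
by rewrite -{1}(mulgKV n (n * s)%g) pM ?nG // conjS' // nN.
Qed.

Lemma psi0 : psi 0 = 0.
Proof. by rewrite /psi el1_zero phi0 ffunE. Qed.

Lemma psi_aut : alg_aut psi.
Proof.
have psi_inj : injective psi.
  move=> b c E; have : el1 b = el1 c.
    apply: phiI; rewrite ?inA_el1 //; apply/ffunP=> y.
    case yG: (y \in G); last first.
      case: (phiA (inA_el1 b)) => p0 _; case: (phiA (inA_el1 c)) => q0 _.
      by rewrite p0 ?q0 ?yG.
    rewrite !phi_formula ?inA_el1 // !ffunE; case: ifP => // H.
    by rewrite !psi_twist // E.
  by move/ffunP/(_ 1%g); rewrite !el1_at1.
split.
- by move=> c x y; rewrite /psi el1_lin phiL ?inA_el1 // ffunE ffunE.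
- by rewrite /psi -/e en.
- by move=> x y; rewrite /psi el1_mul phiM ?inA_el1 // ffunE.
apply: inj_surj_bij => // c.
have r'A : A (ind_act n^-1 (el1 c)) := inA_act (groupVr nG) (inA_el1 c).
case: (phiS r'A) => r [rA rE]; exists (r 1%g).
have := phi_formula rA nG; rewrite mulVg => <-.
by rewrite rE ffunE mulgV el1_at1.
Qed.

Lemma phi_eqv : Ind_eqv G S act phi (Phi n psi).
Proof.
move=> r rA; apply/ffunP=> y; rewrite ffunE; case: ifP => yG.
  exact: phi_formula.
by case: (phiA rA) => p0 _; rewrite p0 ?yG.
Qed.

End N.
End Ext.


Lemma indep m (f : 'I_m -> B -> B) :
  (forall i, S_aut S act (f i)) -> (forall i j, f i =1 f j -> i = j) ->
  forall a : 'I_m -> B, (forall y, \sum_i f i y * a i = 0) -> forall i, a i = 0.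
Proof.
move=> Hf Hd.
have fa : forall i, alg_aut (f i) by move=> i; case: (Hf i).
have fc : forall i s b, s \in S -> f i (act s b) = act s (f i b).
  by move=> i s b sS; case: (Hf i) => _ H; apply: H.
pose rel (a : 'I_m -> B) := forall y, \sum_i f i y * a i = 0.
pose supp (a : 'I_m -> B) := [set i | a i != 0].
suff H : forall N (a : 'I_m -> B), (#|supp a| <= N)%N -> rel a ->
    forall i, a i = 0.
  by move=> a ra; apply: (H _ a (leqnn _)).
elim=> [|N IH] a.
  rewrite leqn0 cards_eq0 => /eqP E _ i.
  by have := in_set0 i; rewrite -E inE => /negbFE/eqP.
move=> Hcard ra i0; apply/eqP/negPn/negP => nz.
pose P x := exists a' : 'I_m -> B,
  [/\ rel a', forall i, a i = 0 -> a' i = 0 & a' i0 = x].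
have PI : two_sided_ideal P.
  split.
  - exists (fun _ => 0); split=> // y.
    by rewrite big1 // => i _; rewrite mulr0.
  - move=> x y [a1 [r1 s1 e1]] [a2 [r2 s2 e2]].
    exists (fun i => a1 i + a2 i); split.
    + move=> z /=; have -> : \sum_i f i z * (a1 i + a2 i) =
          \sum_i f i z * a1 i + \sum_i f i z * a2 i.
        by rewrite -big_split; apply: eq_bigr => i _; rewrite mulrDr.
      by rewrite r1 r2 addr0.
    + by move=> i ai; rewrite s1 ?s2 ?addr0.
    by rewrite e1 e2.
  move=> b x [a1 [r1 s1 e1]]; split.
    case: (fa i0) => _ _ _ [g fK gK].
    exists (fun i => f i (g b) * a1 i); split.
    + move=> y; rewrite -[RHS](r1 (y * g b)); apply: eq_bigr => i _.
      by rewrite (autM (fa i)) mulrA.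
    + by move=> i ai; rewrite s1 // mulr0.
    by rewrite gK e1.
  exists (fun i => a1 i * b); split.
  + move=> y /=; transitivity ((\sum_i f i y * a1 i) * b); last by rewrite r1 mul0r.
    by rewrite mulr_suml; apply: eq_bigr => i _; rewrite mulrA.
  + by move=> i ai; rewrite s1 // mul0r.
  by rewrite e1.
case: Hs => H10 Hsimp.
case: (Hsimp P PI) => [Hz|Hall].
  by move: nz; rewrite (Hz (a i0)) ?eqxx //; exists a; split.
case: (Hall 1) => a' [ra' sa' ea'].
have sub : forall c : 'I_m -> B, rel c -> (forall i, a i = 0 -> c i = 0) ->
    c i0 = 0 -> forall i, c i = 0.
  move=> c rc csub c0; apply: (IH c) => //.
  have i0in : i0 \in supp a by rewrite inE nz.
  have : supp c \subset supp a :\ i0.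
    apply/subsetP=> i; rewrite !inE => ci; apply/andP; split.
      by apply/eqP => ii; move: ci; rewrite ii c0 eqxx.
    by apply/eqP => ai; move: ci; rewrite csub // eqxx.
  have h := cardsD1 i0 (supp a); rewrite i0in /= add1n in h.
  rewrite h ltnS in Hcard.
  by move/subset_leq_card => Hc; apply: leq_trans Hc Hcard.
have Hcomm : forall i z, f i z * a' i = a' i * f i0 z.
  move=> i z; apply/eqP; rewrite -subr_eq0; apply/eqP.
  apply: (sub (fun i => f i z * a' i - a' i * f i0 z)) => //.
  - move=> y; rewrite (eq_bigr (fun i => f i (y * z) * a' i - (f i y * a' i) * f i0 z)).
      by rewrite sumrB -mulr_suml !ra' mul0r subr0.
    by move=> j _; rewrite mulrBr (autM (fa j)) !mulrA.
  - by move=> j aj; rewrite sa' // mulr0 mul0r subr0.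
  by rewrite ea' mulr1 mul1r subrr.
have Hfix' : forall t, t \in S -> forall i, act t^-1%g (a' i) - a' i = 0.
  move=> t tS; apply: (sub (fun i => act t^-1%g (a' i) - a' i)).
  - move=> y; rewrite (eq_bigr (fun i => act t^-1%g (f i (act t y) * a' i) - f i y * a' i)).
      by rewrite sumrB -(aut_sum (act_aut (groupVr tS))) !ra' (aut0 (act_aut (groupVr tS))) subr0.
    move=> j _; rewrite mulrBr (autM (act_aut (groupVr tS))) fc // actVK //.
  - by move=> j aj; rewrite sa' // (aut0 (act_aut (groupVr tS))) subr0.
  by rewrite ea' (aut1 (act_aut (groupVr tS))) subrr.
have Hfix : forall i t, t \in S -> act t (a' i) = a' i.
  move=> i t tS; apply/eqP; rewrite -subr_eq0 -{1}[t]invgK; apply/eqP.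
  by apply: Hfix'; rewrite groupV.
have Hzero : forall i, i != i0 -> a' i = 0.
  move=> i ni; have [c Ec] : exists c : k, a' i = c%:A.
    by apply/Hinv => s sS; apply: Hfix.
  rewrite Ec; apply/eqP; rewrite scaler_eq0 oner_eq0 orbF.
  apply/negPn/negP => cnz; move/eqP: ni; apply; apply: Hd => z.
  have := Hcomm i z; rewrite Ec mulr_algr mulr_algl.
  by move/(scalerI cnz).
have := ra' 1; rewrite (bigD1 i0) //= big1 => [|i ni].
  by rewrite (aut1 (fa i0)) ea' mulr1 addr0 => /eqP; rewrite (negbTE H10).
by rewrite Hzero // mulr0.
Qed.


Lemma dimB_pos : (0 < \dim {:B})%N.
Proof.
rewrite lt0n dimv_eq0; apply/negP => /eqP E.
have := memvf (1 : B); rewrite E memv0 => /eqP E1.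
by case: Hs => /eqP H _; apply: H.
Qed.

Lemma dim_ffun (I : finType) : dim {ffun I -> B} = (#|I| * dim B)%N.
Proof. by []. Qed.

Lemma aut_bound (Hgal : galois_bijective S act) m (f : 'I_m -> B -> B) :
  (forall i, S_aut S act (f i)) -> (forall i j, f i =1 f j -> i = j) ->
  (m <= #|S|)%N.
Proof.
move=> Hf Hd.
have fa : forall i, alg_aut (f i) by move=> i; case: (Hf i).
set d := \dim {:B}.
have dpos : (0 < d)%N := dimB_pos.
have h1 : (d * d <= #|S| * d)%N.
  pose M (c : 'M[k]_d) : {ffun 'I_#|S| -> B} :=
    [ffun j => galois_map act c (enum_val j)].
  have := @inj_dim k _ _ M.
  rewrite dim_matrix dim_ffun card_ord -dimvf; apply.
    move=> c x y; apply/ffunP=> j; rewrite !ffunE /galois_map.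
    rewrite scaler_sumr -big_split; apply: eq_bigr => i _.
    rewrite scaler_sumr -big_split; apply: eq_bigr => l _.
    by rewrite !mxE scalerDl scalerA.
  move=> x y Exy; case: (Hgal (galois_map act x)) => c [_ Hu].
  rewrite -(Hu x) //; apply: Hu => s sS.
  have := congr1 (fun F : {ffun 'I_#|S| -> B} => F (enum_rank_in sS s)) Exy.
  by rewrite /= !ffunE enum_rankK_in.
have h2 : (m * d <= d * d)%N.
  set e := vbasis (fullv : {vspace B}).
  pose L (a : {ffun 'I_m -> B}) : {ffun 'I_d -> B} :=
    [ffun j : 'I_d => \sum_i f i e`_j * a i].
  have := @inj_dim k _ _ L.
  rewrite !dim_ffun !card_ord -dimvf; apply.
    move=> c x y; apply/ffunP=> j; rewrite !ffunE.
    rewrite scaler_sumr -big_split; apply: eq_bigr => i _.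
    by rewrite !ffunE mulrDr -scalerAr.
  move=> a b Eab; apply/ffunP => i; apply/eqP; rewrite -subr_eq0; apply/eqP.
  move: i; apply: (indep _ _ Hf Hd (fun i => a i - b i)) => y.
  have Ey := coord_vbasis (memvf y).
  have fy : forall i, f i y = \sum_(j < d) coord e j y *: f i e`_j.
    move=> i; rewrite {1}Ey (aut_sum (fa i)); apply: eq_bigr => j _.
    by rewrite (autZ (fa i)).
  rewrite (eq_bigr (fun i => \sum_(j < d) coord e j y *: (f i e`_j * (a i - b i)))).
    rewrite exchange_big /= big1 // => j _.
    rewrite -scaler_sumr; have := congr1 (fun F : {ffun 'I_d -> B} => F j) Eab.
    rewrite /L !ffunE => Ej.
    rewrite (eq_bigr (fun i => f i e`_j * a i - f i e`_j * b i)).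
      by rewrite sumrB Ej subrr scaler0.
    by move=> i _; rewrite mulrBr.
  by move=> i _; rewrite fy mulr_suml; apply: eq_bigr => j _; rewrite scalerAl.
rewrite leq_pmul2r // in h1; rewrite leq_pmul2r // in h2.
exact: leq_trans h2 h1.
Qed.


Definition rho g := repr (S :* g).

Lemma rho_in g : rho g \in S :* g.
Proof. exact: (mem_repr g (rcoset_refl S g)). Qed.

Lemma rho_coset g : S :* rho g = S :* g.
Proof. exact: rcoset_repr. Qed.

Lemma rho_eq g h : S :* g = S :* h -> rho g = rho h.
Proof. by rewrite /rho => ->. Qed.

Lemma rhoK g : rho (rho g) = rho g.
Proof. exact/rho_eq/rho_coset. Qed.

Lemma rho_G {g} : g \in G -> rho g \in G.
Proof.
move=> gG; have := rho_in g; rewrite mem_rcoset => /sub_SG H.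
by rewrite -(mulgKV g (rho g)) groupM.
Qed.

Lemma rho_mulS s g : s \in S -> rho (s * g)%g = rho g.
Proof. by move=> sS; apply/rho_eq/rcoset_eqP; rewrite mem_rcoset mulgK. Qed.

Definition nsel phi := rho (odflt 1%g [pick x | (x \in G) && (e phi x == 1)]).

Lemma nsel_spec phi : Ind_aut G S act phi ->
  [/\ e phi (nsel phi) = 1, nsel phi \in G, nsel phi \in 'N(S) &
      rho (nsel phi) = nsel phi].
Proof.
move=> Hphi; rewrite /nsel; case: pickP => [x /andP [xG /eqP ex] | H]; last first.
  by case: (e_ex _ Hphi) => x xG ex; move: (H x); rewrite xG ex eqxx.
have en : e phi (rho x) = 1.
  have := rho_in x; rewrite mem_rcoset => xin.
  by rewrite (e_eq _ Hphi _ ex) !ffunE xin act_one.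
rewrite /=; split; rewrite ?rhoK //; [exact: (nG _ Hphi _ en) | exact: (nN _ Hphi _ en)].
Qed.

Lemma nsel_Phi {phi n psi0} : Ind_aut G S act phi -> n \in G -> n \in 'N(S) ->
  alg_aut psi0 -> Ind_eqv G S act phi (Phi n psi0) -> rho n = n ->
  nsel phi = n /\ psi phi n =1 psi0.
Proof.
move=> Hphi nG nN Ha E rn; split; last first.
  by move=> b; rewrite /psi (E _ (inA_el1 b)) Phi_el.
have [en _ _ rr] := nsel_spec _ Hphi.
move: en; rewrite /e (E _ (inA_el1 1)) Phi_one // !ffunE.
case: ifP => [H _|_ /eqP]; last by rewrite eq_sym (negbTE one_nz).
by rewrite -rn -rr; apply: rho_eq; apply/rcoset_eqP; rewrite mem_rcoset.
Qed.

Lemma twist_inv {n ps psi'} : twist n ps -> cancel ps psi' -> cancel psi' ps ->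
  forall s x, s \in S -> psi' (act (n * s * n^-1)%g x) = act s (psi' x).
Proof. by move=> tw K K' s x sS; rewrite -{1}[x]K' -tw // K. Qed.

Lemma S_aut_comp {n p1 p1' p2} : alg_aut p1 -> twist n p1 -> cancel p1 p1' ->
  cancel p1' p1 -> alg_aut p2 -> twist n p2 -> S_aut S act (p1' \o p2).
Proof.
move=> a1 t1 K K' a2 t2; split; first exact: aut_comp (aut_inv a1 K K') a2.
by move=> s b sS /=; rewrite t2 // (twist_inv t1 K K').
Qed.

Lemma Phi_ext n p1 p2 r : p1 =1 p2 -> Phi n p1 r = Phi n p2 r.
Proof. by move=> E; apply/ffunP=> y; rewrite !ffunE E. Qed.


Lemma rho_S g : (g * (rho g)^-1)%g \in S.
Proof. by have := rho_in g; rewrite mem_rcoset -groupV invMg invgK. Qed.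

Lemma backward :
  has_card_mod (S_aut S act) (fun f g => f =1 g) #|S| -> (S <| G)%g ->
  (forall g, g \in G -> conj_iso S act g) ->
  has_card_mod (Ind_aut G S act) (Ind_eqv G S act) #|G|.
Proof.
case=> fS [fSa fSi fSc] nSG Hc.
have GN : forall g, g \in G -> g \in 'N(S).
  by move=> g gG; apply: (subsetP (normal_norm nSG)).
pose tw n := epsilon (inhabits (@id B)) (fun p : B -> B => alg_aut p /\ twist n p).
have twP : forall n, n \in G -> alg_aut (tw n) /\ twist n (tw n).
  move=> n nG; apply: (epsilon_spec (inhabits (@id B)) (fun p : B -> B => alg_aut p /\ twist n p)).
  case: (Hc _ (groupVr nG)) => p [pa pt]; exists p; split => // s b sS.
  have := pt (n * s * n^-1)%g b (conjS' _ _ (GN n nG) sS).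
  have -> : (n^-1 * (n * s * n^-1) * n^-1^-1)%g = s.
    by rewrite invgK !mulgA mulVg mul1g mulgKV.
  by [].
pose jS (g : gT) : 'I_#|S| := enum_rank_in (group1 S) g.
pose F (i : 'I_#|G|) := Phi (rho (enum_val i))
  (tw (rho (enum_val i)) \o fS (jS (enum_val i * (rho (enum_val i))^-1)%g)).
have FA : forall i, Ind_aut G S act (F i).
  move=> i; have gG := enum_valP i; have nG := rho_G gG.
  have [ta tt] := twP _ nG; have [fa fc] := fSa (jS (enum_val i * (rho (enum_val i))^-1)%g).
  apply: Phi_aut => //; first by apply: GN.
    exact: aut_comp.
  by move=> s b sS /=; rewrite fc // tt.
exists F; split => //.
  move=> i i' E.
  have gG := enum_valP i; have nG := rho_G gG.
  have gG' := enum_valP i'; have nG' := rho_G gG'.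
  have [ta tt] := twP _ nG; have [fa fc] := fSa (jS (enum_val i * (rho (enum_val i))^-1)%g).
  have [ta' tt'] := twP _ nG'.
  have [fa' fc'] := fSa (jS (enum_val i' * (rho (enum_val i'))^-1)%g).
  have [n1 p1] := nsel_Phi (FA i) nG (GN _ nG) (aut_comp ta fa) (fun r _ => erefl)
    (rhoK _).
  have [n2 p2] := nsel_Phi (FA i') nG' (GN _ nG') (aut_comp ta' fa') (fun r _ => erefl)
    (rhoK _).
  have En : nsel (F i) = nsel (F i') by rewrite /nsel /e (E _ (inA_el1 1)).
  have Ep : forall n b, psi (F i) n b = psi (F i') n b.
    by move=> n b; rewrite /psi (E _ (inA_el1 b)).
  rewrite n1 n2 in En.
  have Ej : jS (enum_val i * (rho (enum_val i))^-1)%g =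
            jS (enum_val i' * (rho (enum_val i'))^-1)%g.
    apply: fSi => b; apply: (aut_inj ta).
    by have := p1 b; rewrite Ep En p2 /= => ->.
  have := congr1 enum_val Ej; rewrite !(enum_rankK_in (group1 S)) ?rho_S // -En.
  by move/(congr1 (fun x => x * rho (enum_val i)))%g; rewrite !mulgKV => /enum_val_inj.
move=> x Hx.
have [en nG nN' rr] := nsel_spec _ Hx.
set n := nsel x in en nG nN' rr.
have pa := psi_aut _ Hx _ en; have pt := psi_twist _ Hx _ en.
have [ta ttw] := twP _ nG; case: (ta) => _ _ _ [ti tK tK'].
have [j Ej] := fSc _ (S_aut_comp ta ttw tK tK' pa pt).
have sS : enum_val j \in S := enum_valP j.
have gG : (enum_val j * n)%g \in G := groupM (sub_SG sS) nG.
exists (enum_rank_in (group1 G) (enum_val j * n)%g) => r rA.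
rewrite (phi_eqv _ Hx _ en _ rA).
rewrite /F (enum_rankK_in (group1 G) gG) rho_mulS // rr mulgK /jS.
rewrite (enum_valK_in (group1 S)); apply: Phi_ext => b /=.
by rewrite Ej /= tK'.
Qed.


Lemma sum_const_eq (T : finType) (V : {set T}) (c : T -> nat) (M : nat) :
  (forall v, v \in V -> c v <= M)%N -> (\sum_(v in V) c v = #|V| * M)%N ->
  forall v, v \in V -> c v = M.
Proof.
move=> Hle Hsm v vV; apply/eqP; rewrite eqn_leq Hle //=.
move: Hsm; rewrite -sum_nat_const !(bigD1 v vV) /=.
match goal with |- ((_ + ?X)%N = (_ + ?Y)%N -> _) =>
  have : (X <= Y)%N by apply: leq_sum => i /andP [iV _]; apply: Hle end.
lia.
Qed.

Lemma memI {T : finType} {p : pred T} {x} : x \in [set y | p y] -> p x.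
Proof. by rewrite inE. Qed.

Lemma forward (Hgal : galois_bijective S act) :
  has_card_mod (Ind_aut G S act) (Ind_eqv G S act) #|G| ->
  [/\ has_card_mod (S_aut S act) (fun f g => f =1 g) #|S|, (S <| G)%g &
      forall g, g \in G -> conj_iso S act g].
Proof.
case=> F [FA Fi Fc].
pose nn i := nsel (F i).
have nnP : forall i, [/\ e (F i) (nn i) = 1, nn i \in G, nn i \in 'N(S) &
                        rho (nn i) = nn i].
  by move=> i; apply: nsel_spec.
pose ps i := psi (F i) (nn i).
have psA : forall i, alg_aut (ps i).
  by move=> i; have [en _ _ _] := nnP i; apply: psi_aut (FA i) _ en.
have psT : forall i, twist (nn i) (ps i).
  by move=> i; have [en _ _ _] := nnP i; apply: psi_twist (FA i) _ en.
have Feqv : forall i, Ind_eqv G S act (F i) (Phi (nn i) (ps i)).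
  by move=> i; have [en _ _ _] := nnP i; apply: phi_eqv (FA i) _ en.
have dist : forall i i', nn i = nn i' -> ps i =1 ps i' -> i = i'.
  move=> i i' En Ep; apply: Fi => r rA.
  by rewrite (Feqv i r rA) (Feqv i' r rA) En; apply: Phi_ext.
pose I v := [set i | nn i == v].
have famI : forall v i0, i0 \in I v -> forall q, cancel (ps i0) q -> cancel q (ps i0) ->
    (forall j : 'I_#|I v|, S_aut S act (q \o ps (enum_val j))) /\
    (forall j j' : 'I_#|I v|, q \o ps (enum_val j) =1 q \o ps (enum_val j') -> j = j').
  move=> v i0 i0I q K K'; split.
    move=> j; have /eqP Ej := memI (enum_valP j).
    have /eqP E0 := memI i0I.
    apply: (S_aut_comp (psA i0) (psT i0) K K' (psA _)).
    by rewrite E0; have := psT (enum_val j); rewrite Ej.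
  move=> j j' Ejj; apply: enum_val_inj; apply: dist.
    by have /eqP -> := memI (enum_valP j); have /eqP -> := memI (enum_valP j').
  by move=> b; have := Ejj b; rewrite /= => /(congr1 (ps i0)); rewrite !K'.
have Ibound : forall v, (#|I v| <= #|S|)%N.
  move=> v; case: (pickP (mem (I v))) => [i0 i0I | none]; last first.
    by rewrite (eq_card0 none).
  case: (psA i0) => _ _ _ [q K K'].
  have [Ha Hd] := famI v i0 i0I q K K'.
  exact: (aut_bound Hgal _ _ Ha Hd).
pose V := [set nn i | i in 'I_#|G|].
have VP : forall v, v \in V -> [/\ v \in G, v \in 'N(S) & rho v = v].
  by move=> v /imsetP [i _ ->]; have [_ ? ? ?] := nnP i.
have Hsum : #|G| = (\sum_(v in V) #|I v|)%N.
  have H : (#|'I_(#|G|)| = \sum_(v in V) #|I v|)%N.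
    rewrite -[LHS]sum1_card; etransitivity.
      by apply: (partition_big nn (mem V)) => i _; apply: imset_f.
    apply: eq_bigr => v _; rewrite -[RHS]sum1_card; apply: eq_bigl => i.
    by rewrite !inE.
  by rewrite -H card_ord.
have Hle1 : (#|G| <= #|V| * #|S|)%N.
  by rewrite Hsum -sum_nat_const; apply: leq_sum => v _; apply: Ibound.
pose cs := [set S :* v | v in V].
have csV : #|cs| = #|V|.
  apply: card_in_imset => v v' vV v'V E.
  have [_ _ r1] := VP v vV; have [_ _ r2] := VP v' v'V.
  by rewrite -r1 -r2; apply: rho_eq.
pose NG := ('N_G(S))%G.
have sSNG : S \subset NG by rewrite subsetI sSG normG.
have csN : cs \subset rcosets S NG.
  apply/subsetP=> C /imsetP [v vV ->]; have [vG vN _] := VP v vV.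
  by rewrite -rcosetE; apply: imset_f; rewrite inE vG.
have Hle2 : (#|V| <= #|NG : S|)%N by rewrite -csV; apply: subset_leq_card.
have Lag := Lagrange sSNG.
have HNG : (#|NG| <= #|G|)%N by apply: subset_leq_card; rewrite subsetIl.
have Spos : (0 < #|S|)%N := cardG_gt0 S.
have EV : (#|V| * #|S| = #|G|)%N.
  apply/eqP; rewrite eqn_leq Hle1 andbT.
  apply: leq_trans HNG; rewrite -Lag mulnC leq_mul2l Hle2 orbT //.
have ENG : #|NG| = #|G|.
  apply/eqP; rewrite eqn_leq HNG /= -EV -Lag mulnC leq_mul2l Hle2 orbT //.
have nSG : (S <| G)%g.
  rewrite /normal sSG /=.
  have : NG == G :> {set gT} by rewrite eqEcard subsetIl ENG leqnn.
  by move/eqP => E; rewrite -E subsetIr.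
have GN : forall g, g \in G -> g \in 'N(S).
  by move=> g gG; apply: (subsetP (normal_norm nSG)).
have Isz : forall v, v \in V -> #|I v| = #|S|.
  move=> v vV.
  have := @sum_const_eq _ V (fun v => #|I v|) #|S| (fun v _ => Ibound v).
  by rewrite -Hsum EV; apply.
split => //.
- pose i0 := enum_rank_in (group1 G) 1%g.
  pose v0 := nn i0.
  have v0V : v0 \in V by apply: imset_f.
  have i0I : i0 \in I v0 by rewrite inE.
  have ES := Isz v0 v0V.
  case: (psA i0) => _ _ _ [q K K'].
  have [Ha Hd] := famI v0 i0 i0I q K K'.
  exists (fun j : 'I_#|S| => q \o ps (enum_val (cast_ord (esym ES) j))); split.
  + by move=> j; apply: Ha.
  + by move=> j j' /Hd /(congr1 (cast_ord ES)); rewrite !cast_ordKV.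
  move=> f [fa fc].
  have [v0G v0N rv0] := VP v0 v0V.
  have Hf : Ind_aut G S act (Phi v0 (ps i0 \o f)).
    apply: Phi_aut => //; first exact: aut_comp.
    by move=> s b sS /=; rewrite fc // psT.
  have [i Ei] := Fc _ Hf.
  have Ei' : Ind_eqv G S act (F i) (Phi v0 (ps i0 \o f)).
    by move=> r rA; rewrite Ei.
  have [n1 p1] := nsel_Phi (FA i) v0G v0N (aut_comp (psA i0) fa) Ei' rv0.
  have iI : i \in I v0 by rewrite inE -n1.
  exists (cast_ord ES (enum_rank_in iI i)) => b /=.
  rewrite cast_ordK (enum_rankK_in iI iI).
  by rewrite /ps /nn n1 p1 /= K.
move=> g gG.
have csE : cs = rcosets S G.
  apply/eqP; rewrite eqEcard; apply/andP; split.
    apply/subsetP=> C /imsetP [v vV ->]; have [vG _ _] := VP v vV.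
    by rewrite -rcosetE; apply: imset_f.
  rewrite csV; have LG := Lagrange sSG.
  rewrite -(leq_pmul2l Spos) LG -EV mulnC //.
have : S :* g \in cs by rewrite csE -rcosetE; apply: imset_f.
case/imsetP=> v vV Egv; case/imsetP: (vV) => i _ vi.
have tS : (g * v^-1)%g \in S by rewrite -mem_rcoset -Egv rcoset_refl.
have [vG vN _] := VP v vV.
case: (psA i) => _ _ _ [q K K'].
exists (q \o act (g * v^-1)^-1%g); split.
  exact: aut_comp (aut_inv (psA i) K K') (act_aut (groupVr tS)).
move=> h b hS /=.
have ghS : (g * h * g^-1)%g \in S by apply: conjS'; rewrite ?GN.
have vhS : (v * h * v^-1)%g \in S by apply: conjS'.
rewrite -actM ?groupV //.
have -> : ((g * v^-1)^-1 * (g * h * g^-1))%g = ((v * h * v^-1) * (g * v^-1)^-1)%g.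
  by rewrite invMg invgK !mulgA !mulgKV.
rewrite actM ?groupV // vi.
by rewrite (twist_inv (psT i) K K') // -vi.
Qed.

End Main.

Theorem corollary3p2 (k : fieldType) (gT : finGroupType) (G S : {group gT})
    (B : falgType k) (act : gT -> B -> B) :
  S \subset G ->
  simple_S_Galois S act ->
  has_card_mod (Ind_aut G S act) (Ind_eqv G S act) #|G|
  <->
  [/\ has_card_mod (S_aut S act) (fun f g => f =1 g) #|S|,
      (S <| G)%g &
      forall g, g \in G -> conj_iso S act g].
Proof.
move=> sSG [HSa Hs Hinv Hgal]; split.
  exact: forward.
by case=> H1 H2 H3; apply: backward.
Qed.
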